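(* Let $h$ and $k$ be relatively prime odd integers with $k>0$. Then $$B_{1}(h,k)=h\,s_{5}(h,k)+\frac{1}{2k}-\frac{1}{2}.$$
   Context: $[x]$ denotes the greatest integer $\le x$, and the sawtooth function is $((x))=x-[x]-\tfrac12$ if $x\notin\mathbb{Z}$ and $((x))=0$ if $x\in\mathbb{Z}$. For integers $h,k$ with $k>0$, $\gcd(h,k)=1$: $$B_{1}(h,k)=\sum_{j=1}^{k-1}(-1)^{j+\left[\frac{hj}{k}\right]}\left[\frac{hj}{k}\right],\qquad s_{5}(h,k)=\sum_{j \bmod k}(-1)^{j+\left[\frac{hj}{k}\right]}\left(\left(\frac{j}{k}\right)\right),$$ the latter sum over a complete residue system modulo $k$ (the Hardy–Berndt sum $s_5$). *)

(* Defs.v *)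
From mathcomp Require Import all_boot all_order all_algebra.
Set Implicit Arguments. Unset Strict Implicit. Unset Printing Implicit Defensive.
Import Order.TTheory GRing.Theory Num.Theory.
Local Open Scope ring_scope.

Definition floorq (x : rat) : int := Num.floor x.

Definition sawtooth (x : rat) : rat :=
  if x == (floorq x)%:~R then 0 else x - (floorq x)%:~R - 1/2.

Definition sgn_pow (n : int) : rat := (-1) ^ n.

Definition B1 (h k : int) : rat :=
  \sum_(1 <= j < `|k|%N)
     sgn_pow (j%:Z + floorq ((h * j%:Z)%:~R / k%:~R))
       * (floorq ((h * j%:Z)%:~R / k%:~R))%:~R.

(* s_5(h,k) = sum_{j mod k} (-1)^{j+[hj/k]} ((j/k)), over j = 0..k-1 *)
Definition s5 (h k : int) : rat :=
  \sum_(0 <= j < `|k|%N)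
     sgn_pow (j%:Z + floorq ((h * j%:Z)%:~R / k%:~R))
       * sawtooth (j%:~R / k%:~R).

(* Main.v *)
Require Import Defs.
From mathcomp Require Import all_boot all_order all_algebra zify ring lra.
Import Order.TTheory GRing.Theory Num.Theory.
Local Open Scope ring_scope.

Lemma odd_int (h : int) : odd `|h|%N -> exists a : int, h = 2 * a + 1.
Proof.
case: h => n /= Hn.
  exists (n./2)%:Z. have := odd_double_half n. rewrite Hn. lia.
exists (- (n./2)%:Z - 1). have := odd_double_half n. rewrite (negbTE Hn). rewrite NegzE. lia.
Qed.

Lemma sgn_pow_2 (r c : int) : sgn_pow (r + 2 * c) = sgn_pow r.
Proof.
rewrite /sgn_pow expfzDr ?oppr_eq0 ?oner_eq0 // -exprz_exp.
have -> : (-1 : rat) ^ (2:int) = 1 by rewrite (_ : (2:int) = 2%N) // -exprnP sqrrN expr1n.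
by rewrite exp1rz mulr1.
Qed.

Lemma sgn_pow_nat (n : nat) : sgn_pow n%:Z = (-1) ^+ n.
Proof. by []. Qed.

Lemma alt_sum (c d : rat) m :
  \sum_(0 <= r < (2 * m).+1) (-1) ^+ r * (r%:R * c - d) = m%:R * c - d.
Proof.
elim: m => [|m IH]; first by rewrite big_nat1 /= expr0 mul0r add0r mul1r.
rewrite (_ : (2 * m.+1).+1 = ((2 * m).+1).+1.+1)%N; last by lia.
rewrite big_nat_recr //= big_nat_recr //= IH.
rewrite (_ : (-1 : rat) ^+ (2 * m).+1 = -1); last by rewrite exprS exprM sqrrN !expr1n mulr1.
rewrite (_ : (-1 : rat) ^+ (2 * m).+2 = 1); last by rewrite !exprS exprM sqrrN !expr1n !mulr1 mulrNN mulr1.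
have E1 : ((2 * m).+1%:R : rat) = 2 * m%:R + 1 by rewrite -addn1 natrD natrM.
have E2 : ((2 * m).+2%:R : rat) = 2 * m%:R + 2 by rewrite -addn2 natrD natrM.
have E3 : (m.+1%:R : rat) = m%:R + 1 by rewrite -addn1 natrD.
rewrite E1 E2 E3. lra.
Qed.

Section Main.
Variables (h k : int).
Hypothesis kpos : 0 < k.

Let kne0 : k != 0. Proof. by rewrite gt_eqF. Qed.
Let kR : (k%:~R : rat) != 0. Proof. by rewrite intr_eq0. Qed.
Let kRpos : (0 : rat) < k%:~R. Proof. by rewrite ltr0z. Qed.

Lemma floor_eq (j : nat) :
  floorq ((h * j%:Z)%:~R / k%:~R) = ((h * j%:Z) %/ k)%Z.
Proof.
rewrite /floorq; apply: floor_def.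
set q := ((h * j%:Z) %/ k)%Z; set r := ((h * j%:Z) %% k)%Z.
have r0 : 0 <= r by apply: modz_ge0.
have rk : r < k by apply: ltz_pmod.
have -> : ((h * j%:Z)%:~R : rat) = q%:~R * k%:~R + r%:~R.
  by rewrite {1}(divz_eq (h * j%:Z) k) intrD intrM.
have r0' : (0 : rat) <= r%:~R by rewrite ler0z.
have rk' : (r%:~R : rat) < k%:~R by rewrite ltr_int.
have -> : ((q%:~R * k%:~R + r%:~R) / k%:~R : rat) = q%:~R + r%:~R / k%:~R by field.
have h1 : (r%:~R / k%:~R : rat) < 1 by rewrite ltr_pdivrMr // mul1r.
have h2 : (0:rat) <= r%:~R / k%:~R by rewrite divr_ge0 // ltW.
rewrite intrD /=; apply/andP; split; lra.
Qed.

Lemma saw_eq (j : nat) : (0 < j)%N -> (j%:Z < k) ->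
  sawtooth (j%:~R / k%:~R) = j%:~R / k%:~R - 1/2.
Proof.
move=> j0 jk.
have fl : floorq (j%:~R / k%:~R) = 0.
  rewrite /floorq; apply: floor_def; rewrite add0r /= divr_ge0 ?ler0z ?ltW //=.
  by rewrite ltr_pdivrMr // mul1r ltr_int.
rewrite /sawtooth fl /= mulf_eq0 invr_eq0 (negbTE kR) orbF.
have -> : ((j%:~R : rat) == 0%:~R) = false.
  by rewrite eqr_int; apply/negbTE; rewrite -lt0n.
by rewrite subr0.
Qed.

Lemma term_sgn {a b : int} (ha : h = 2 * a + 1) (hb : k = 2 * b + 1) (j : nat) :
  sgn_pow (j%:Z + ((h * j%:Z) %/ k)%Z) = (-1) ^+ (absz ((h * j%:Z) %% k)%Z).
Proof.
set q := ((h * j%:Z) %/ k)%Z; set r := ((h * j%:Z) %% k)%Z.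
have E : h * j%:Z = q * k + r by rewrite {1}(divz_eq (h * j%:Z) k).
have E2 : j%:Z + q = r + 2 * (b * q + q - a * j%:Z).
  rewrite ha hb in E. nia.
rewrite E2 sgn_pow_2 -sgn_pow_nat gez0_abs //.
exact: modz_ge0.
Qed.

Lemma res_lt (i : nat) : (absz ((h * i%:Z) %% k)%Z < absz k)%N.
Proof.
have := ltz_pmod (h * i%:Z) kpos; have := modz_ge0 (h * i%:Z) kne0.
have := gtz0_abs kpos. lia.
Qed.

Lemma res_inj (hc : coprimez h k) (i j : nat) : (i < absz k)%N -> (j < absz k)%N ->
  absz ((h * i%:Z) %% k)%Z = absz ((h * j%:Z) %% k)%Z -> i = j.
Proof.
move=> ik jk E.
have E' : ((h * i%:Z) %% k)%Z = ((h * j%:Z) %% k)%Z.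
  by rewrite -(gez0_abs (modz_ge0 _ kne0)) E gez0_abs // modz_ge0.
have : (k %| h * (i%:Z - j%:Z))%Z by rewrite mulrBr -eqz_mod_dvd E'.
rewrite Gauss_dvdzr; last by rewrite coprimez_sym.
rewrite -eqz_mod_dvd !modz_small; first by move/eqP; lia.
  have := gtz0_abs kpos; lia.
have := gtz0_abs kpos; lia.
Qed.
End Main.

Theorem theorem12 (h k : int) :
  (0 < k) -> coprimez h k -> odd `|h|%N -> odd `|k|%N ->
  B1 h k = h%:~R * s5 h k + 1 / (2 * k%:~R) - 1 / 2.
Proof.
move=> kpos hc oh ok.
have [a ha] := odd_int _ oh; have [b hb] := odd_int _ ok.
have kne0 : k != 0 by rewrite gt_eqF.
have kR : (k%:~R : rat) != 0 by rewrite intr_eq0.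
have kK : k = (absz k)%:Z by rewrite gtz0_abs.
have K0 : (0 < absz k)%N by rewrite absz_gt0.
have Km : absz k = (2 * (absz k)./2).+1.
  by have := odd_double_half (absz k); rewrite ok; lia.
pose G (n : nat) : rat := (-1) ^+ n * (n%:R * k%:~R^-1 - h%:~R / 2).
have S1 : h%:~R * s5 h k - B1 h k =
    \sum_(1 <= j < absz k) G (absz ((h * j%:Z) %% k)%Z).
  rewrite /s5 /B1 big_ltn //.
  have -> : sawtooth ((0%N)%:~R / k%:~R) = 0.
    by rewrite /sawtooth mul0r /floorq floor0 eqxx.
  rewrite mulr0 add0r mulr_sumr -sumrB.
  apply: eq_big_nat => j /andP[j1 jK].
  rewrite floor_eq // saw_eq //; last by rewrite kK ltz_nat.
  rewrite (term_sgn _ _ kpos ha hb) /G.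
  have r0 := modz_ge0 (h * j%:Z) kne0.
  have -> : ((absz ((h * j%:Z) %% k)%Z)%:R : rat) = (((h * j%:Z) %% k)%Z)%:~R.
    by rewrite -[LHS]/(((absz ((h * j%:Z) %% k)%Z)%:Z)%:~R) gez0_abs.
  have E : ((h * j%:Z)%:~R : rat) = (((h * j%:Z) %/ k)%Z)%:~R * k%:~R + (((h * j%:Z) %% k)%Z)%:~R.
    by rewrite {1}(divz_eq (h * j%:Z) k) intrD intrM.
  have E' : (((h * j%:Z) %% k)%Z)%:~R = (h%:~R * j%:~R - (((h * j%:Z) %/ k)%Z)%:~R * k%:~R : rat).
    by rewrite -intrM E; ring.
  rewrite E'. field. exact: kR.
have S2 : \sum_(1 <= j < absz k) G (absz ((h * j%:Z) %% k)%Z) =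
    \sum_(0 <= j < absz k) G (absz ((h * j%:Z) %% k)%Z) - G 0.
  by rewrite (big_ltn K0) mulr0 mod0z /= addrC addKr.
have S3 : \sum_(0 <= j < absz k) G (absz ((h * j%:Z) %% k)%Z) =
    \sum_(0 <= j < absz k) G j.
  rewrite !big_mkord.
  have finj : injective (fun i : 'I_(absz k) => Ordinal (res_lt h _ kpos i)).
    move=> i j /(congr1 val) /= E; apply: ord_inj.
    exact: (res_inj _ _ kpos hc _ _ (ltn_ord i) (ltn_ord j) E).
  by rewrite [RHS](reindex_inj finj).
have S4 : \sum_(0 <= j < absz k) G j = ((absz k)./2)%:R * k%:~R^-1 - h%:~R / 2.
  by rewrite {1}Km /G alt_sum.
have kM : (k%:~R : rat) = 2 * ((absz k)./2)%:R + 1.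
  by rewrite {1}kK {1}Km -[LHS]/(((2 * (absz k)./2).+1)%:R) -addn1 natrD natrM.
move: S1; rewrite S2 S3 S4 /G expr0 mul1r mul0r sub0r opprK.
move: (s5 h k) (B1 h k) => s B.
move=> H.
move: kR H; rewrite kM; move: ((absz k)./2)%:R => m kR H.
have -> : B = h%:~R * s - (h%:~R * s - B) by ring.
rewrite H.
field. by rewrite kR.
Qed.
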